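(* Let $D$ be a strongly connected digraph of order $n\ge 2$ and girth $g$. Then $\chi_A(D)\le \left\lceil\frac{n}{g-1}\right\rceil$.
   Context: Digraphs are finite and loopless; cycles are directed. Girth is the length of a shortest directed cycle. $\chi_A(D)$ is the minimum number of colors in a vertex coloring of $D$ in which every color class induces an acyclic subdigraph. *)

(* Defs.v *)
From Stdlib Require Import ClassicalEpsilon.
From mathcomp Require Import all_boot.
Set Implicit Arguments. Unset Strict Implicit. Unset Printing Implicit Defensive.

Record digraph := Digraph {
  vtx : finType;
  arc : rel vtx;
  arc_irr : irreflexive arc }.

(* A directed cycle: a nonempty sequence of distinct vertices v_0 ... v_{k-1}
   with arcs v_i -> v_{i+1} and v_{k-1} -> v_0.  Its length is [size s]. *)
Definition dcycle (D : digraph) (s : seq (vtx D)) : bool :=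
  [&& s != [::], uniq s & cycle (@arc D) s].

Definition is_girth (D : digraph) (g : nat) : Prop :=
  (exists s, @dcycle D s /\ size s = g) /\ (forall s, @dcycle D s -> g <= size s).

Definition strongly_connected (D : digraph) : Prop :=
  forall x y : vtx D, connect (@arc D) x y.

Definition induces_acyclic (D : digraph) (A : pred (vtx D)) : Prop :=
  forall s, @dcycle D s -> ~ all A s.

Definition acyclic_colorable (D : digraph) (k : nat) : Prop :=
  exists f : vtx D -> 'I_k, forall i : 'I_k, @induces_acyclic D (fun x => f x == i).

Definition pb (P : Prop) : bool :=
  if excluded_middle_informative P then true else false.

Lemma pbP (P : Prop) : reflect P (pb P).
Proof. rewrite /pb; case: excluded_middle_informative => h; by constructor. Qed.


Lemma acyclic_colorable_ex (D : digraph) : exists k, pb (acyclic_colorable D k).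
Proof.
exists #|vtx D|; apply/pbP; exists (@enum_rank (vtx D)) => i s /and3P [s0 us cs] /allP hs.
case: s s0 us cs hs => [|x [|y s]] //= _.
- by rewrite andbT (@arc_irr D).
- move=> /andP [nxy _] _ h; move/negP: nxy; apply.
  have /eqP hx := h x (mem_head _ _).
  have /eqP hy : enum_rank y == i by apply: h; rewrite !inE eqxx orbT.
  by rewrite inE -(enum_rankK x) -(enum_rankK y) hx hy eqxx.
Qed.

Definition chiA (D : digraph) : nat := ex_minn (acyclic_colorable_ex D).

Definition ceil_div (n m : nat) : nat := n %/ m + (n %% m != 0).

(* Main.v *)
Require Import Defs.
From mathcomp Require Import all_boot.
From mathcomp Require Import zify.

Lemma div_lt_ceil (a n m : nat) : 0 < m -> a < n -> a %/ m < ceil_div n m.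
Proof.
move=> hm han; rewrite /ceil_div.
have := divn_eq n m; have := divn_eq a m; have := ltn_pmod a hm; have := ltn_pmod n hm.
case: eqP => h /=.
- rewrite h; move=> _ _ ha hn.
  have : a %/ m * m < n %/ m * m by lia.
  rewrite ltn_pmul2r //; lia.
- move=> _ _ _ _; rewrite addn1 ltnS; exact: leq_div2r (ltnW han).
Qed.

Theorem mainTheorem17 (D : digraph) (g : nat) :
  strongly_connected D -> 2 <= #|vtx D| -> is_girth D g ->
  chiA D <= ceil_div #|vtx D| (g - 1).
Proof.
move=> _ _ [[s0 [cs0 hs0]] hg].
have g2 : 2 <= g.
  move: cs0; rewrite /dcycle -hs0; case: s0 {hs0} => [|x [|y s]] //=.
  by rewrite (@arc_irr D) ?andbF ?andFb ?andbT.
set m := g - 1.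
have m0 : 0 < m by rewrite /m; lia.
set k := ceil_div #|vtx D| m.
have hf : forall x : vtx D, enum_rank x %/ m < k.
  by move=> x; apply: div_lt_ceil => //; rewrite -cardE; exact: ltn_ord.
rewrite /chiA; case: ex_minnP => c _ hmin; apply: hmin; apply/pbP.
exists (fun x => Ordinal (hf x)) => i s cs /allP hs.
have := hg s cs.
have /and3P [_ us _] := cs.
have : size (map (fun x => val (enum_rank x)) s) <= size (iota (i * m) m).
  apply: uniq_leq_size.
    by rewrite map_inj_uniq // => x y /val_inj /enum_rank_inj.
  move=> j /mapP [x xs ->]; have := hs x xs; rewrite /= => /eqP <- /=.
  rewrite mem_iota; set r := val (enum_rank x).
  have := divn_eq r m; have := ltn_pmod r m0; lia.
rewrite size_map size_iota /m; lia.
Qed.
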